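(* Let $G$ be a finite group and $H$ a subgroup such that $\mathcal{O}_G(H)$ is Boolean of rank $2$ with coatoms $M_1,M_2$. Then $|M_1:H|=2$ if and only if $|G:M_2|=2$.
   Context: $\mathcal{O}_G(H)=\{K\mid H\le K\le G\}$; Boolean of rank $2$ means isomorphic to the lattice of subsets of a $2$-element set; coatoms are the maximal elements of $\mathcal{O}_G(H)\setminus\{G\}$. *)

(* Defs.v *)
From mathcomp Require Import all_boot all_order all_fingroup.
Set Implicit Arguments. Unset Strict Implicit. Unset Printing Implicit Defensive.
Local Open Scope group_scope.

Definition overgroups (gT : finGroupType) (H G : {group gT}) : {set {group gT}} :=
  [set K : {group gT} | (H \subset K) && (K \subset G)].

Definition boolean_rank2 (gT : finGroupType) (H G : {group gT}) : Prop :=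
  exists f : {group gT} -> {set 'I_2},
    [/\ {in overgroups H G &, injective f},
        f @: overgroups H G = [set: {set 'I_2}] &
        {in overgroups H G &, forall K L : {group gT}, (K \subset L) = (f K \subset f L)}].

Definition coatom (gT : finGroupType) (H G K : {group gT}) : Prop :=
  [/\ K \in overgroups H G, K != G &
      forall L : {group gT}, L \in overgroups H G -> L != G ->
        K \subset L -> L = K].

(* Main.v *)
Require Import Defs.
From mathcomp Require Import all_boot all_order all_fingroup.
Local Open Scope group_scope.

Definition phi2 (c : {set 'I_2}) := (ord0 \in c, (@ord_max 1) \in c).
Lemma ord2_cases (i : 'I_2) : i = ord0 \/ i = ord_max.
Proof. case: i => [[|[|n]] Hi]; [left|right|by []]; exact: val_inj. Qed.
Lemma set2E (c d : {set 'I_2}) : (c == d) = (phi2 c == phi2 d).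
Proof.
apply/eqP/eqP => [->//|[e0 e1]]; apply/setP => i.
by case: (ord2_cases i) => ->.
Qed.
Lemma fin4 (a b c : {set 'I_2}) :
  [&& a != set0, a != setT, b != set0, b != setT & a != b] ->
  [&& a :&: b == set0, a :|: b == setT & [|| c == set0, c == a, c == b | c == setT]].
Proof.
rewrite !set2E /phi2 !inE.
by case: (ord0 \in a); case: (ord0 \in b); case: (ord0 \in c);
   case: (ord_max \in a); case: (ord_max \in b); case: (ord_max \in c).
Qed.

Lemma arith (a b c d : nat) : (a * c * b = b * d * a -> a * b * c = a * b * d)%N.
Proof. move=> e; rewrite mulnAC e (mulnC a b); by rewrite mulnAC. Qed.

Lemma ovE (gT : finGroupType) (H G K : {group gT}) :
  (K \in overgroups H G) = (H \subset K) && (K \subset G).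
Proof. by rewrite /overgroups inE. Qed.

Theorem lemma10p7 (gT : finGroupType) (G H M1 M2 : {group gT}) :
  H \subset G ->
  boolean_rank2 H G ->
  M1 != M2 -> coatom H G M1 -> coatom H G M2 ->
  (#|M1 : H| = 2 <-> #|G : M2| = 2).
Proof.
move=> sHG [f [finj fim fmono]] neq [M1o M1G M1max] [M2o M2G M2max].
have Ho : H \in overgroups H G by rewrite ovE subxx sHG.
have Go : G \in overgroups H G by rewrite ovE sHG subxx.
have fH : f H = set0.
  have : set0 \in f @: overgroups H G by rewrite fim inE.
  case/imsetP => K0 K0o e; apply/eqP; rewrite -subset0 e -fmono //.
  by move: K0o; rewrite ovE => /andP[].
have fG : f G = setT.
  have : setT \in f @: overgroups H G by rewrite fim inE.
  case/imsetP => K0 K0o e; apply/eqP; rewrite eqEsubset subsetT /= e -fmono //.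
  by move: K0o; rewrite ovE => /andP[].
have coat : forall M : {group gT}, M \in overgroups H G -> M != G ->
   (forall L : {group gT}, L \in overgroups H G -> L != G -> M \subset L -> L = M) ->
   (f M != set0) && (f M != setT).
  move=> M Mo MG Mmax; apply/andP; split; last first.
    by apply: contra MG => /eqP e; apply/eqP; apply: finj => //; rewrite e fG.
  apply/eqP => e.
  have eMH : M = H by apply: finj => //; rewrite e fH.
  have : [set ord0] \in f @: overgroups H G by rewrite fim inE.
  case/imsetP => K1 K1o e1.
  have K1G : K1 != G.
    apply/eqP => eK; move: e1; rewrite eK fG => /eqP; rewrite eq_sym set2E /phi2 !inE.
    by [].
  have := Mmax K1 K1o K1G; rewrite eMH.
  move: (K1o); rewrite ovE => /andP[-> _] /(_ isT) eK.
  by move: e1; rewrite eK fH => /eqP; rewrite set2E /phi2 !inE.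
case/andP: (coat _ M1o M1G M1max) => a0 aT.
case/andP: (coat _ M2o M2G M2max) => b0 bT.
have ab : f M1 != f M2.
  by apply: contra neq => /eqP e; apply/eqP; apply: finj.
have F := fun c => @fin4 _ _ c (introT and5P (And5 a0 aT b0 bT ab)).
case/and3P: (F set0) => /eqP abI /eqP abU _.
have classif : forall K : {group gT}, K \in overgroups H G ->
    [\/ K = H, K = M1, K = M2 | K = G].
  move=> K Ko; case/and3P: (F (f K)) => _ _ /or4P[] /eqP e.
  - by constructor 1; apply: finj => //; rewrite e fH.
  - by constructor 2; apply: finj.
  - by constructor 3; apply: finj.
  - by constructor 4; apply: finj => //; rewrite e fG.
move: (M1o) (M2o); rewrite !ovE => /andP[sHM1 sM1G] /andP[sHM2 sM2G].
have IH : M1 :&: M2 = H.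
  have Io : (M1 :&: M2)%G \in overgroups H G.
    by rewrite ovE subsetI sHM1 sHM2 /= (subset_trans (subsetIl _ _) sM1G).
  have : f (M1 :&: M2)%G = f H.
    apply/eqP; rewrite fH -subset0 -abI subsetI -!fmono //=.
    by rewrite subsetIl subsetIr.
  by move/(finj _ _ Io Ho)/(congr1 val).
have join : forall K : {group gT}, K \in overgroups H G -> M1 \subset K ->
    M2 \subset K -> K = G.
  move=> K Ko s1 s2; apply: finj => //; rewrite fG; apply/eqP.
  by rewrite eqEsubset subsetT /= -abU subUset -!fmono // s1 s2.
have key : M1 \subset 'N(M2) -> #|M1 : H| = #|G : M2|.
  move=> nM.
  have Jo : (M1 <*> M2)%G \in overgroups H G.
    by rewrite ovE /= join_subG sM1G sM2G (subset_trans sHM1 (joing_subl _ _)).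
  have eJ := join _ Jo (joing_subl _ _) (joing_subr _ _).
  have eMG : M1 * M2 = G by rewrite -norm_joinEl // -eJ.
  have := mul_cardG M1 M2; rewrite eMG IH -(Lagrange sHM1) -(Lagrange sM2G).
  move=> e; have hp := muln_gt0 #|H| #|M2|; rewrite cardG_gt0 cardG_gt0 /= in hp.
  apply/eqP; rewrite -(eqn_pmul2l hp); apply/eqP; exact: arith.
split.
- move=> i2; rewrite -key // ; apply/subsetP => x xM1.
  have nH : H <| M1 by apply: index2_normal.
  have xNH : x \in 'N(H) by apply: (subsetP (normal_norm nH)).
  have xG : x \in G by apply: (subsetP sM1G).
  apply/normP.
  have Jo : (M2 :^ x)%G \in overgroups H G.
    rewrite ovE /= -{1}(normP xNH) conjSg sHM2 /=.
    by rewrite -(conjGid xG) conjSg.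
  case: (classif _ Jo) => /(congr1 val) /= e.
  + have : M2 :==: H.
      by rewrite eq_sym eqEcard sHM2 -e cardJg leqnn.
    move/eqP => e2; case/negP: b0; apply/eqP.
    by have -> : M2 = H by apply: val_inj.
  + case/negP: neq; apply/eqP; apply: val_inj => /=.
    by rewrite -(conjGid (groupVr xM1)) -e conjsgK.
  + by [].
  + case/negP: M2G; apply/eqP; apply: val_inj => /=; apply/eqP.
    by rewrite eqEcard sM2G -e cardJg leqnn.
- move=> i2; rewrite key // .
  exact: subset_trans sM1G (normal_norm (index2_normal sM2G i2)).
Qed.
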